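(* For $r, p_{1}, p_{2}\in \mathbb N$, \begin{align*} \sum_{n=1}^\infty \frac{r H_n^{(p_{1})} H_n^{(p_{2})}}{n(n+r)} &=S_{p_{1},p_{2}+1}^{+,+}+S_{p_{2},p_{1}+1}^{+,+}-\zeta(p_{1}+p_{2}+1) +\sum_{b=1}^{r-1}S(p_{1},p_{2},1,b,0)\\ &\quad +\sum_{b=1}^{r-1}S(p_{2},p_{1},1,b,0) -\sum_{b=1}^{r-1}S(0,p_{1}+p_{2}+1,1,b,0)\,. \end{align*}
   Context: $H_n^{(q)}=\sum_{j=1}^n j^{-q}$ for $q\in\mathbb N$, and $H_n^{(0)}:=n$. For $q\in\mathbb Z_{\ge0}$... more precisely for $q\in\{0\}\cup\mathbb N$ and $m,t,b\in\mathbb N$, $S(q,m,t,b,0):=\sum_{n=1}^\infty\frac{H_n^{(q)}}{n^{m}(n+b)^{t}}$ (so $S(0,m,1,b,0)=\sum_{n\ge1}\frac{1}{n^{m-1}(n+b)}$). $S_{p,q}^{+,+}:=\sum_{n=1}^\infty H_n^{(p)}/n^q$. $\zeta$ is the Riemann zeta function. Empty sums are $0$. *)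

(* Defs.v *)
From Stdlib Require Import Reals.
From Coquelicot Require Import Coquelicot.
Open Scope R_scope.

(* H q n = sum_{j=1}^n j^{-q};  for q = 0 this gives n, matching H_n^{(0)} := n. *)
Fixpoint Hq (q n : nat) : R :=
  match n with
  | O => 0
  | S m => Hq q m + / (INR (S m) ^ q)
  end.

Fixpoint sum1 (f : nat -> R) (n : nat) : R :=
  match n with
  | O => 0
  | S m => sum1 f m + f (S m)
  end.

(* S(q,m,t,b,0) = sum_{n>=1} H_n^{(q)} / (n^m (n+b)^t)   (index shifted: n = k+1) *)
Definition S5 (q m t b : nat) : R :=
  Series (fun k => Hq q (S k) / (INR (S k) ^ m * (INR (S k) + INR b) ^ t)).

Definition Spp (p q : nat) : R :=
  Series (fun k => Hq p (S k) / INR (S k) ^ q).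

Definition zeta (s : nat) : R :=
  Series (fun k => / INR (S k) ^ s).

(* Main.v *)
Require Import Defs.
From Stdlib Require Import Reals Lra Lia.
From Coquelicot Require Import Coquelicot.
Open Scope R_scope.

Lemma INRS_pos (k : nat) : 1 <= INR (S k).
Proof. rewrite S_INR. pose proof (pos_INR k). lra. Qed.

Lemma pow_ge_self (x : R) (p : nat) : 1 <= x -> (1 <= p)%nat -> x <= x ^ p.
Proof.
  intros Hx Hp. destruct p. lia. simpl.
  pose proof (pow_R1_Rle x p Hx).
  replace x with (x * 1) at 1 by ring. apply Rmult_le_compat_l; lra.
Qed.

Lemma Hq_S p m : Hq p (S m) = Hq p m + / INR (S m) ^ p.
Proof. reflexivity. Qed.

Lemma Hq_0 (m : nat) : Hq 0 m = INR m.
Proof. induction m. reflexivity. rewrite Hq_S. rewrite IHm, S_INR. simpl. field. Qed.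

Lemma Hq_nonneg p m : 0 <= Hq p m.
Proof.
  induction m. simpl; lra. rewrite Hq_S.
  pose proof (INRS_pos m). pose proof (pow_R1_Rle _ p H).
  assert (0 < / INR (S m) ^ p) by (apply Rinv_0_lt_compat; lra). lra.
Qed.

Lemma Hq_mono p m : Hq p m <= Hq p (S m).
Proof.
  rewrite Hq_S. pose proof (INRS_pos m). pose proof (pow_R1_Rle _ p H).
  assert (0 < / INR (S m) ^ p) by (apply Rinv_0_lt_compat; lra). lra.
Qed.

Lemma Hq_le1 p m : (1 <= p)%nat -> Hq p m <= Hq 1 m.
Proof.
  intro Hp. induction m. simpl; lra. rewrite !Hq_S.
  pose proof (INRS_pos m). pose proof (pow_ge_self _ p H Hp).
  assert (/ INR (S m) ^ p <= / INR (S m) ^ 1).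
  { rewrite pow_1. apply Rinv_le_contravar; lra. }
  lra.
Qed.

Lemma Hq1_ge1 k : 1 <= Hq 1 (S k).
Proof.
  induction k. simpl. lra. pose proof (Hq_mono 1 (S k)). lra.
Qed.

Lemma is_series_lim (a : nat -> R) (l : R) : is_series a l <-> is_lim_seq (sum_n a) l.
Proof. split; intro H; exact H. Qed.

Lemma psum_id (a w : nat -> R) (N : nat) : a 0%nat = 0 ->
  sum_n (fun k => a (S k) * (w k - w (S k))) N =
  sum_n (fun k => (a (S k) - a k) * w k) N - a (S N) * w (S N).
Proof.
  intro H0. induction N.
  - rewrite !sum_O, H0. change (?x = ?y) with (@eq R x y). ring.
  - rewrite !sum_Sn, IHN. unfold plus; simpl. change (?x = ?y) with (@eq R x y). ring.
Qed.

Lemma kron (a w : nat -> R) (N : nat) :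
  (forall k, a k <= a (S k)) -> (forall k, w (S k) <= w k) ->
  forall d t, 0 <= t <= w (N + d)%nat ->
  (a (S (N + d)) - a (S N)) * t <=
  sum_n (fun k => (a (S k) - a k) * w k) (N + d) - sum_n (fun k => (a (S k) - a k) * w k) N.
Proof.
  intros Ha Hw d. induction d; intros t Ht.
  - rewrite Nat.add_0_r. lra.
  - rewrite Nat.add_succ_r in *. rewrite sum_Sn. unfold plus; simpl.
    assert (Hle := Hw (N + d)%nat).
    specialize (IHd t ltac:(lra)).
    assert (Hinc := Ha (S (N + d))).
    assert ((a (S (S (N + d))) - a (S (N + d))) * t <= (a (S (S (N + d))) - a (S (N + d))) * w (S (N+d))).
    { apply Rmult_le_compat_l; lra. }
    lra.
Qed.

Lemma a_nonneg (a : nat -> R) : a 0%nat = 0 -> (forall k, a k <= a (S k)) -> forall k, 0 <= a k.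
Proof. intros H0 Ha k. induction k. lra. specialize (Ha k). lra. Qed.

Lemma abel (a w : nat -> R) (L : R) :
  a 0%nat = 0 -> (forall k, a k <= a (S k)) ->
  (forall k, 0 <= w (S k) <= w k) -> is_lim_seq w 0 ->
  is_series (fun k => (a (S k) - a k) * w k) L ->
  is_series (fun k => a (S k) * (w k - w (S k))) L.
Proof.
  intros H0 Ha Hw Hw0 HC.
  set (C := sum_n (fun k => (a (S k) - a k) * w k)).
  assert (HCl : is_lim_seq C L) by (apply is_series_lim; exact HC).
  assert (He : is_lim_seq (fun N => a (S N) * w (S N)) 0).
  { apply is_lim_seq_spec. intro eps.
    pose proof (proj2 (is_lim_seq_spec C L) HCl) as HC'.
    destruct (HC' (pos_div_2 (pos_div_2 eps))) as [N1 HN1].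
    assert (Hl : is_lim_seq (fun M => a (S N1) * w (S M)) 0).
    { replace (Finite 0) with (Rbar_mult (a (S N1)) 0) by (simpl; f_equal; ring).
      apply is_lim_seq_scal_l. apply (is_lim_seq_incr_1 w 0). exact Hw0. }
    destruct (proj2 (is_lim_seq_spec _ _) Hl (pos_div_2 eps)) as [N2 HN2].
    exists (max N1 N2). intros M HM.
    assert (HM1 : (N1 <= M)%nat) by lia.
    assert (HM2 : (N2 <= M)%nat) by lia.
    specialize (HN2 M HM2). simpl in HN2.
    pose proof (HN1 M HM1) as A1. pose proof (HN1 N1 (le_n _)) as A2.
    simpl in A1, A2.
    destruct (Nat.le_exists_sub N1 M HM1) as [d [Hd _]].
    rewrite Nat.add_comm in Hd. subst M.
    assert (Ht : 0 <= w (S (N1 + d)) <= w (N1 + d)%nat) by apply Hw.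
    pose proof (kron a w N1 Ha (fun k => proj2 (Hw k)) d (w (S (N1 + d))) Ht) as K.
    fold C in K.
    pose proof (a_nonneg a H0 Ha (S (N1 + d))).
    pose proof (a_nonneg a H0 Ha (S N1)).
    assert (0 <= a (S (N1 + d)) * w (S (N1 + d))) by (apply Rmult_le_pos; lra).
    assert (0 <= a (S N1) * w (S (N1 + d))) by (apply Rmult_le_pos; lra).
    rewrite Rminus_0_r in HN2 |- *.
    rewrite Rabs_pos_eq in HN2 by lra. rewrite Rabs_pos_eq by lra.
    apply Rabs_lt_between in A1. apply Rabs_lt_between in A2.
    simpl in *. lra. }
  apply is_series_lim.
  apply is_lim_seq_ext with (fun N => C N - a (S N) * w (S N)).
  { intro N. unfold C. rewrite psum_id; auto. }
  replace L with (L - 0) by ring.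
  apply is_lim_seq_minus'; auto.
Qed.

Lemma sum_inv2 N : sum_n (fun k => / INR (S k) * / INR (S k)) N <= 2 - / INR (S N).
Proof.
  induction N.
  - rewrite sum_O. simpl. lra.
  - rewrite sum_Sn. change (@plus _ ?a ?b) with (Rplus a b).
    pose proof (INRS_pos N).
    assert (E : INR (S (S N)) = INR (S N) + 1) by apply S_INR.
    rewrite E.
    set (x := INR (S N)) in *.
    assert (/ (x + 1) * / (x + 1) <= / x - / (x + 1)).
    { replace (/ x - / (x + 1)) with (/ (x * (x + 1))) by (field; lra).
      rewrite <- Rinv_mult. apply Rinv_le_contravar; nra. }
    lra.
Qed.

Lemma ex_series_g : ex_series (fun k => Hq 1 (S k) / (INR (S k) * INR (S k))).
Proof.
  set (w := fun k => / INR (S k)).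
  set (h := fun k => Hq 1 (S k) * (w k - w (S k))).
  assert (Hw : forall k, w (S k) <= w k).
  { intro k. unfold w. pose proof (INRS_pos k). rewrite (S_INR (S k)).
    apply Rinv_le_contravar; lra. }
  assert (Hh : ex_series h).
  { destruct (ex_finite_lim_seq_incr (sum_n h) 2) as [l Hl].
    - intro n. rewrite sum_Sn. unfold plus; simpl.
      assert (0 <= h (S n)). { unfold h. apply Rmult_le_pos. apply Hq_nonneg. pose proof (Hw (S n)). lra. }
      lra.
    - intro n. unfold h. rewrite psum_id by reflexivity.
      assert (E : forall k, (Hq 1 (S k) - Hq 1 k) * w k = / INR (S k) * / INR (S k)).
      { intro k. rewrite Hq_S. unfold w. rewrite pow_1. ring. }
      rewrite (sum_n_ext _ _ n E).
      pose proof (sum_inv2 n).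
      assert (0 <= Hq 1 (S n) * w (S n)).
      { apply Rmult_le_pos. apply Hq_nonneg. unfold w. left. apply Rinv_0_lt_compat. pose proof (INRS_pos (S n)). lra. }
      assert (0 < / INR (S n)) by (apply Rinv_0_lt_compat; pose proof (INRS_pos n); lra).
      lra.
    - exists l. apply is_series_lim. exact Hl. }
  apply (@ex_series_le R_AbsRing R_CompleteNormedModule _ (fun k => 2 * h k)).
  - intro k. change (norm ?x) with (Rabs x).
    pose proof (INRS_pos k). pose proof (Hq_nonneg 1 (S k)).
    set (x := INR (S k)) in *.
    rewrite Rabs_pos_eq.
    2: { unfold Rdiv. apply Rmult_le_pos. lra. left. apply Rinv_0_lt_compat. nra. }
    unfold h, w. fold x. rewrite (S_INR (S k)). fold x.
    replace (/ x - / (x + 1)) with (/ (x * (x + 1))) by (field; lra).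
    unfold Rdiv. rewrite <- Rmult_assoc. rewrite (Rmult_comm 2). rewrite Rmult_assoc.
    apply Rmult_le_compat_l. lra.
    replace (2 * / (x * (x + 1))) with (/ (x * (x + 1) / 2)) by (field; lra).
    apply Rinv_le_contravar; nra.
  - destruct Hh as [l Hl]. exists (2 * l). apply (is_series_scal_l 2 h l Hl).
Qed.

Lemma div_le x y d e : 0 <= x <= y -> 0 < d <= e -> x / e <= y / d.
Proof.
  intros Hx Hd. unfold Rdiv. apply Rmult_le_compat; try lra.
  left; apply Rinv_0_lt_compat; lra.
  apply Rinv_le_contravar; lra.
Qed.

Lemma dom (T : nat -> R) : (forall k, Rabs (T k) <= Hq 1 (S k) / (INR (S k) * INR (S k))) -> ex_series T.
Proof.
  intro H. apply (@ex_series_le R_AbsRing R_CompleteNormedModule _ (fun k => Hq 1 (S k) / (INR (S k) * INR (S k)))).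
  2: exact ex_series_g. intro k. change (norm ?x) with (Rabs x). apply H.
Qed.

Lemma ex1 p q b : (1 <= p)%nat -> (1 <= q)%nat ->
  ex_series (fun k => Hq p (S k) / (INR (S k) ^ q * (INR (S k) + INR b))).
Proof.
  intros Hp Hq'. apply dom. intro k.
  pose proof (INRS_pos k). pose proof (pos_INR b).
  pose proof (pow_ge_self _ q H Hq').
  pose proof (Hq_nonneg p (S k)). pose proof (Hq_le1 p (S k) Hp).
  rewrite Rabs_pos_eq.
  2: { unfold Rdiv. apply Rmult_le_pos. lra. left. apply Rinv_0_lt_compat. apply Rmult_lt_0_compat; lra. }
  apply div_le. lra. split. nra. apply Rmult_le_compat; lra.
Qed.

Lemma ex3 s b : (1 <= s)%nat ->
  ex_series (fun k => / (INR (S k) ^ s * (INR (S k) + INR b))).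
Proof.
  intros Hs. apply dom. intro k.
  pose proof (INRS_pos k). pose proof (pos_INR b).
  pose proof (pow_ge_self _ s H Hs).
  pose proof (Hq1_ge1 k).
  rewrite Rabs_pos_eq.
  2: { left. apply Rinv_0_lt_compat. apply Rmult_lt_0_compat; lra. }
  replace (/ (INR (S k) ^ s * (INR (S k) + INR b))) with (1 / (INR (S k) ^ s * (INR (S k) + INR b))) by (field; split; lra).
  apply div_le. lra. split. nra. apply Rmult_le_compat; lra.
Qed.

Lemma w_lim b : is_lim_seq (fun k => / (INR (S k) + INR b)) 0.
Proof.
  replace (Finite 0) with (Rbar_inv p_infty) by reflexivity.
  apply is_lim_seq_inv; [| discriminate].
  apply is_lim_seq_le_p_loc with (fun k => INR (S k)).
  - exists 0%nat. intros n _. pose proof (pos_INR b). lra.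
  - apply (is_lim_seq_incr_1 INR). apply is_lim_seq_INR.
Qed.

Lemma abel_b p1 p2 b : (1 <= p1)%nat -> (1 <= p2)%nat ->
  is_series (fun k => Hq p1 (S k) * Hq p2 (S k) * (/ (INR (S k) + INR b) - / (INR (S (S k)) + INR b)))
   (Series (fun k => Hq p1 (S k) / (INR (S k) ^ p2 * (INR (S k) + INR b)))
    + Series (fun k => Hq p2 (S k) / (INR (S k) ^ p1 * (INR (S k) + INR b)))
    - Series (fun k => / (INR (S k) ^ (p1 + p2) * (INR (S k) + INR b)))).
Proof.
  intros H1 H2.
  apply (abel (fun k => Hq p1 k * Hq p2 k) (fun k => / (INR (S k) + INR b))).
  - simpl. ring.
  - intro k. pose proof (Hq_mono p1 k). pose proof (Hq_mono p2 k).
    pose proof (Hq_nonneg p1 k). pose proof (Hq_nonneg p2 k).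
    apply Rmult_le_compat; lra.
  - intro k. pose proof (INRS_pos k). pose proof (pos_INR b).
    rewrite (S_INR (S k)). split.
    + left. apply Rinv_0_lt_compat. lra.
    + apply Rinv_le_contravar; lra.
  - apply w_lim.
  - pose proof (is_series_minus _ _ _ _ (is_series_plus _ _ _ _
         (Series_correct _ (ex1 p1 p2 b H1 H2)) (Series_correct _ (ex1 p2 p1 b H2 H1)))
         (Series_correct _ (ex3 (p1 + p2) b ltac:(lia)))) as HS.
    eapply is_series_ext; [| exact HS].
    intro k. change (plus ?x ?y) with (x + y). change (opp ?x) with (- x).
    rewrite !Hq_S. rewrite pow_add.
    pose proof (INRS_pos k). pose proof (pos_INR b).
    assert (INR (S k) ^ p1 <> 0) by (apply pow_nonzero; lra).
    assert (INR (S k) ^ p2 <> 0) by (apply pow_nonzero; lra).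
    change (?x = ?y) with (@eq R x y). change (plus ?x ?y) with (x + y). field. repeat split; lra.
Qed.

Lemma S5a_eq p q b : S5 p q 1 b = Series (fun k => Hq p (S k) / (INR (S k) ^ q * (INR (S k) + INR b))).
Proof. unfold S5. apply Series_ext. intro k. rewrite pow_1. reflexivity. Qed.

Lemma S5c_eq s b : S5 0 (s + 1) 1 b = Series (fun k => / (INR (S k) ^ s * (INR (S k) + INR b))).
Proof.
  unfold S5. apply Series_ext. intro k. rewrite pow_1, Hq_0, pow_add, pow_1.
  pose proof (INRS_pos k). pose proof (pos_INR b).
  assert (INR (S k) ^ s <> 0) by (apply pow_nonzero; lra).
  field. repeat split; lra.
Qed.

Lemma main_ind p1 p2 : (1 <= p1)%nat -> (1 <= p2)%nat -> forall m,
  is_series (fun k => Hq p1 (S k) * Hq p2 (S k) * (/ INR (S k) - / (INR (S k) + INR (S m))))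
   (Spp p1 (p2 + 1) + Spp p2 (p1 + 1) - zeta (p1 + p2 + 1)
     + sum1 (fun b => S5 p1 p2 1 b) m
     + sum1 (fun b => S5 p2 p1 1 b) m
     - sum1 (fun b => S5 0 (p1 + p2 + 1) 1 b) m).
Proof.
  intros H1 H2. induction m.
  - simpl sum1.
    pose proof (abel_b p1 p2 0 H1 H2) as HS.
    change (INR 0) with 0 in HS.
    assert (E1 : forall p q, Series (fun k => Hq p (S k) / (INR (S k) ^ q * (INR (S k) + 0))) = Spp p (q + 1)).
    { intros p q. unfold Spp. apply Series_ext. intro k. rewrite Rplus_0_r, pow_add, pow_1. reflexivity. }
    assert (E3 : Series (fun k => / (INR (S k) ^ (p1 + p2) * (INR (S k) + 0))) = zeta (p1 + p2 + 1)).
    { unfold zeta. apply Series_ext. intro k. rewrite Rplus_0_r, (pow_add _ (p1 + p2) 1), pow_1. reflexivity. }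
    rewrite E1, E1, E3 in HS.
    replace (Spp p1 (p2 + 1) + Spp p2 (p1 + 1) - zeta (p1 + p2 + 1) + 0 + 0 - 0)
      with (Spp p1 (p2 + 1) + Spp p2 (p1 + 1) - zeta (p1 + p2 + 1)) by ring.
    eapply is_series_ext; [| exact HS].
    intro k. cbv beta. change (INR 1) with 1. rewrite (S_INR (S k)). rewrite !Rplus_0_r. reflexivity.
  - pose proof (abel_b p1 p2 (S m) H1 H2) as HS.
    rewrite <- S5a_eq, <- S5a_eq in HS. rewrite <- S5c_eq in HS.
    pose proof (is_series_plus _ _ _ _ IHm HS) as HP.
    simpl sum1.
    lazymatch goal with |- is_series _ ?G => lazymatch type of HP with is_series _ ?V => replace G with V end end.
    2: { change (plus ?x ?y) with (x + y). change (?x = ?y) with (@eq R x y). ring. }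
    eapply is_series_ext; [| exact HP ].
    + intro k. cbv beta. change (plus ?x ?y) with (x + y).
      change (?x = ?y) with (@eq R x y).
      rewrite (S_INR (S k)), (S_INR (S m)). ring_simplify.
      replace (INR (S k) + 1 + INR (S m)) with (INR (S k) + (INR (S m) + 1)) by ring. ring.
Qed.

Theorem lemma7 (r p1 p2 : nat) (hr : (1 <= r)%nat) (hp1 : (1 <= p1)%nat) (hp2 : (1 <= p2)%nat) :
  is_series
    (fun k => INR r * Hq p1 (S k) * Hq p2 (S k) / (INR (S k) * (INR (S k) + INR r)))
    (Spp p1 (p2 + 1) + Spp p2 (p1 + 1) - zeta (p1 + p2 + 1)
     + sum1 (fun b => S5 p1 p2 1 b) (r - 1)
     + sum1 (fun b => S5 p2 p1 1 b) (r - 1)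
     - sum1 (fun b => S5 0 (p1 + p2 + 1) 1 b) (r - 1)).
Proof.
  pose proof (main_ind p1 p2 hp1 hp2 (r - 1)) as H.
  replace (S (r - 1)) with r in H by lia.
  eapply is_series_ext; [| exact H].
  intro k. cbv beta.
  pose proof (INRS_pos k). pose proof (pos_INR r).
  change (?x = ?y) with (@eq R x y). field. lra.
Qed.
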